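(* Let $R\in(0,\pi/2)$ and let $\boldsymbol f=(f_1,f_2)$ be the solution on $(0,\pi)$ of \[\boldsymbol f'=\frac{1}{\sin s}\begin{pmatrix}-3\cos s&3\cos s\\ \cos R-\cos s&\cos s-\cos R\end{pmatrix}\boldsymbol f,\qquad \boldsymbol f(R)\sin^4R=\cos R\,(3,2).\] Then $h(s):=f_2(s)\sin^3s$ is nonnegative on $[R,\pi)$. *)

(* Defs.v *)
From Stdlib Require Import Reals.
Open Scope R_scope.

(* Main.v *)
Require Import Defs.
From Stdlib Require Import Reals Lra Psatz.
Open Scope R_scope.

Lemma dpl_ext (f : R -> R) x l l' : l = l' -> derivable_pt_lim f x l -> derivable_pt_lim f x l'.
Proof. intros ->; auto. Qed.

Lemma cos_lt_1 s : 0 < s < PI -> cos s < 1.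
Proof.
  intros Hs. pose proof (sin_gt_0 s (proj1 Hs) (proj2 Hs)).
  pose proof (sin2_cos2 s). unfold Rsqr in *. pose proof (COS_bound s). nra.
Qed.

Definition Lf (x : R) := ln (1 - cos x) - ln (sin x).

Lemma Lf_deriv s : 0 < s < PI -> derivable_pt_lim Lf s (1 / sin s).
Proof.
  intros Hs. pose proof (sin_gt_0 s (proj1 Hs) (proj2 Hs)) as Hsin.
  pose proof (cos_lt_1 s Hs) as Hc.
  assert (H1 : derivable_pt_lim (fun x => 1 - cos x) s (0 - - sin s)).
  { apply (derivable_pt_lim_minus (fun _ => 1) cos). apply derivable_pt_lim_const.
    apply derivable_pt_lim_cos. }
  assert (Hp : 0 < 1 - cos s) by lra.
  assert (H2 := derivable_pt_lim_comp _ ln s _ _ H1 (derivable_pt_lim_ln _ Hp)).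
  assert (H3 := derivable_pt_lim_comp _ ln s _ _ (derivable_pt_lim_sin s) (derivable_pt_lim_ln _ Hsin)).
  assert (H4 := derivable_pt_lim_minus _ _ _ _ _ H2 H3).
  eapply dpl_ext; [| exact H4].
  pose proof (sin2_cos2 s). unfold Rsqr in *.
  field_simplify_eq; [nra | split; lra].
Qed.

Theorem lemma3p6 (r : R) (f1 f2 : R -> R) :
  0 < r < PI / 2 ->
  (forall s, 0 < s < PI ->
     derivable_pt_lim f1 s ((- 3 * cos s * f1 s + 3 * cos s * f2 s) / sin s) /\
     derivable_pt_lim f2 s (((cos r - cos s) * f1 s + (cos s - cos r) * f2 s) / sin s)) ->
  f1 r * sin r ^ 4 = cos r * 3 ->
  f2 r * sin r ^ 4 = cos r * 2 ->
  forall s, r <= s < PI -> 0 <= f2 s * sin s ^ 3.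
Proof.
  intros Hr Hd H1 H2 s Hs.
  assert (HPI := PI_RGT_0).
  assert (Hcr : 0 < cos r) by (apply cos_gt_0; lra).
  assert (Hsr : 0 < sin r) by (apply sin_gt_0; lra).
  set (E := fun x => sin x * sin x * exp (cos r * Lf x)).
  set (u := fun x => (f2 x - f1 x) * E x).
  assert (HE : forall x, 0 < x < PI -> 0 < E x).
  { intros x Hx. pose proof (sin_gt_0 x (proj1 Hx) (proj2 Hx)).
    pose proof (exp_pos (cos r * Lf x)). unfold E. apply Rmult_lt_0_compat; nra. }
  assert (Hu : forall x, 0 < x < PI -> derivable_pt_lim u x 0).
  { intros x Hx. pose proof (sin_gt_0 x (proj1 Hx) (proj2 Hx)) as Hsx.
    destruct (Hd x Hx) as [D1 D2].
    assert (Dg := derivable_pt_lim_minus _ _ _ _ _ D2 D1).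
    assert (DL := derivable_pt_lim_scal _ (cos r) _ _ (Lf_deriv x Hx)).
    assert (DX := derivable_pt_lim_comp _ exp x _ _ DL (derivable_pt_lim_exp _)).
    assert (DS := derivable_pt_lim_mult _ _ _ _ _ (derivable_pt_lim_sin x) (derivable_pt_lim_sin x)).
    assert (DE := derivable_pt_lim_mult _ _ _ _ _ DS DX).
    assert (DU := derivable_pt_lim_mult _ _ _ _ _ Dg DE).
    eapply dpl_ext; [| exact DU].
    unfold mult_real_fct, comp, mult_fct, minus_fct. field. lra. }
  assert (Hu0 : u r < 0).
  { unfold u. assert (f2 r - f1 r < 0).
    { assert ((f2 r - f1 r) * sin r ^ 4 < 0) by lra.
      assert (0 < sin r ^ 4) by (apply pow_lt; lra). nra. }
    pose proof (HE r ltac:(lra)). nra. }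
  assert (Hg : forall c, r <= c < PI -> f2 c - f1 c < 0).
  { intros c Hc. assert (u c = u r).
    { destruct (Rle_lt_or_eq_dec r c (proj1 Hc)) as [Hlt|Heq]; [|subst; reflexivity].
      destruct (MVT_cor2 u (fun _ => 0) r c Hlt) as [d [Hd1 Hd2]].
      - intros d Hd'. apply Hu. lra.
      - lra. }
    pose proof (HE c ltac:(lra)). unfold u in *.
    destruct (Rlt_or_le (f2 c - f1 c) 0); auto. nra. }
  assert (Hf2r : 0 < f2 r).
  { assert (0 < sin r ^ 4) by (apply pow_lt; lra). nra. }
  assert (Hmono : f2 r <= f2 s).
  { destruct (Rle_lt_or_eq_dec r s (proj1 Hs)) as [Hlt|Heq]; [|subst; lra].
    destruct (MVT_cor2 f2 (fun c => ((cos r - cos c) * f1 c + (cos c - cos r) * f2 c) / sin c) r s Hlt) as [d [Hd1 Hd2]].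
    - intros d Hd'. apply Hd. lra.
    - assert (Hsd : 0 < sin d) by (apply sin_gt_0; lra).
      assert (Hcd : cos d < cos r) by (apply cos_decreasing_1; lra).
      pose proof (Hg d ltac:(lra)).
      assert (0 <= ((cos r - cos d) * f1 d + (cos d - cos r) * f2 d) / sin d).
      { unfold Rdiv. apply Rmult_le_pos; [nra|]. left; apply Rinv_0_lt_compat; lra. }
      nra. }
  assert (0 < sin s) by (apply sin_gt_0; lra).
  assert (0 < sin s ^ 3) by (apply pow_lt; lra). nra.
Qed.
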